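(* Let $\xi>0$, $v_2<v_1$ with either $v_2<0<v_1$ or $0<v_2<v_1$, and for $\lambda>0$ let $\tilde p(x,t|v_j)$ be the (generalized) density of $\tilde X(t)$, the position of the extended telegraph process driven by GCPs with parameter $\lambda$ with Poissonian resets to the origin at rate $\xi$, conditional on $\tilde X(0)=0$, $V(0)=v_j$. Then for $t>0$, $v_2t<x<v_1t$ and $j=1,2$, $$ \pi(x,t):=\lim_{\lambda\to+\infty}\tilde p(x,t|v_j)=\mathbb 1_{\{v_2t<x<v_1t\}}\frac{e^{-\xi t}}{(v_1-v_2)t}+\boldsymbol I(x,t)\frac{\xi}{v_1-v_2}\Gamma^\xi(x,t), $$ where $\Gamma^\xi(x,t)=\Gamma[0,M_x\xi,t\xi]$ if $v_2<0<v_1$ and $\Gamma^\xi(x,t)=\Gamma[0,\frac{x}{v_1}\xi,m_{x,t}\xi]$ if $0<v_2<v_1$.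
   Context: GCP with intensity $\lambda>0$: a Poisson process whose rate is random, exponentially distributed with mean $\lambda$; increments satisfy $P\{\tilde N_\lambda(t+s)-\tilde N_\lambda(t)=k\}=\frac{1}{1+\lambda s}(\frac{\lambda s}{1+\lambda s})^k$. The process: a particle starts at the origin with velocity $V(0)=v_j$ ($v_1,v_2\neq0$, $v_2<v_1$), moves with velocity alternating between $v_1$ and $v_2$, the periods at velocity $v_1$ and at $v_2$ being governed by two independent GCPs of intensity $\lambda$; additionally it is instantaneously reset to the origin at the epochs of an independent Poisson process of rate $\xi$, restarting afresh with velocity $v_j$. Equivalently, its density is $\tilde p(x,t|v_j)=e^{-\xi t}p(x,t|v_j)+\xi\int_0^te^{-\xi s}p(x,s|v_j)ds$, where $p(x,t|v_j)=\frac{\delta(x-v_jt)}{1+\lambda t}+\mathbb 1_{\{v_2t<x<v_1t\}}\frac{\lambda}{(v_1-v_2)(1+\lambda t)}$ is the (generalized, with Dirac delta $\delta$) density of the process without resets. Notation: $M_x=\max\{x/v_1,x/v_2\}$, $m_{x,t}=\min\{x/v_2,t\}$, $\Gamma(a,z_0,z_1)=\int_{z_0}^{z_1}s^{a-1}e^{-s}ds$, $\boldsymbol I(x,t)=\mathbb 1_{\{\min\{v_2t,0\}<x<v_1t\}}$. *)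

(* Defs.v *)
From HB Require Import structures.
From mathcomp Require Import all_boot all_order all_algebra.
From mathcomp Require Import all_classical all_reals all_analysis.
Set Implicit Arguments. Unset Strict Implicit. Unset Printing Implicit Defensive.
Import Order.TTheory GRing.Theory Num.Theory.
Import numFieldNormedType.Exports.
Local Open Scope classical_set_scope.
Local Open Scope ring_scope.

Section Defs.
Variable R : realType.

(* Absolutely continuous part of the density of the GCP-driven telegraph
   process without resets at time s:  1_{v2 s < x < v1 s} lambda/((v1-v2)(1+lambda s)). *)
Definition p_ac (lam v1 v2 x s : R) : R :=
  if (v2 * s < x) && (x < v1 * s) then lam / ((v1 - v2) * (1 + lam * s)) else 0.

Definition dirac_pt (y : R) : \bar R := if y == 0 then +oo%E else 0%E.

Definition p_gen (lam v1 v2 vj x s : R) : \bar R :=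
  (dirac_pt (x - vj * s) * ((1 + lam * s)^-1)%:E + (p_ac lam v1 v2 x s)%:E)%E.

(* int_0^t e^{-xi s} delta(x - vj s)/(1+lam s) ds, evaluated by the sifting
   property delta(x - vj s) = delta(s - x/vj)/|vj|  (vj <> 0). *)
Definition dirac_time_integral (lam xi vj x t : R) : \bar R :=
  let s0 := x / vj in
  if (0 < s0) && (s0 < t) then (expR (- (xi * s0)) / (`|vj| * (1 + lam * s0)))%:E
  else 0%E.

Definition ptilde (lam xi v1 v2 vj x t : R) : \bar R :=
  ((expR (- (xi * t)))%:E * p_gen lam v1 v2 vj x t
   + xi%:E * (\int[lebesgue_measure]_(s in `]0%R, t[)
                 (expR (- (xi * s)) * p_ac lam v1 v2 x s)%:E
              + dirac_time_integral lam xi vj x t))%E.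

Definition Gamma_inc (a z0 z1 : R) : \bar R :=
  (\int[lebesgue_measure]_(s in `]z0%R, z1[) (s `^ (a - 1) * expR (- s))%:E)%E.

Definition M_x (v1 v2 x : R) : R := Num.max (x / v1) (x / v2).
Definition m_xt (v2 x t : R) : R := Num.min (x / v2) t.

Definition I_ind (v1 v2 x t : R) : R :=
  if (Num.min (v2 * t) 0 < x) && (x < v1 * t) then 1 else 0.

Definition Gamma_xi (xi v1 v2 x t : R) : \bar R :=
  if v2 < 0 then Gamma_inc 0 (M_x v1 v2 x * xi) (t * xi)
  else Gamma_inc 0 (x / v1 * xi) (m_xt v2 x t * xi).

Definition pi_lim (xi v1 v2 x t : R) : \bar R :=
  ((if (v2 * t < x) && (x < v1 * t) then expR (- (xi * t)) / ((v1 - v2) * t) else 0)%:E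
   + (I_ind v1 v2 x t * xi / (v1 - v2))%:E * Gamma_xi xi v1 v2 x t)%E.

End Defs.

(* Main.v *)
Require Import Defs.
From HB Require Import structures.
From mathcomp Require Import all_boot all_order all_algebra.
From mathcomp Require Import all_classical all_reals all_analysis.
From mathcomp Require Import ring lra.
From mathcomp Require Import measurable_realfun.
Import Order.TTheory GRing.Theory Num.Theory.
Import numFieldNormedType.Exports.
Local Open Scope classical_set_scope.
Local Open Scope ring_scope.
Set Implicit Arguments. Unset Strict Implicit.
Definition flim {R : realType} (xi v1 v2 x s : R) : R :=
  if (v2 * s < x) && (x < v1 * s) then expR (- (xi * s)) / ((v1 - v2) * s) else 0.

Lemma pac_ge0 (R : realType) (lam v1 v2 x s : R) : 0 <= lam -> v2 < v1 -> 0 < s ->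
  0 <= p_ac lam v1 v2 x s.
Proof.
move=> l0 v21 s0; rewrite /p_ac; case: ifP => // _.
by apply: divr_ge0 => //; apply: mulr_ge0; [rewrite subr_ge0 ltW|rewrite addr_ge0 // mulr_ge0 // ltW].
Qed.

Lemma pac_nd (R : realType) (a b v1 v2 x s : R) : 0 <= a -> a <= b -> v2 < v1 -> 0 < s ->
  p_ac a v1 v2 x s <= p_ac b v1 v2 x s.
Proof.
move=> a0 ab v21 s0; rewrite /p_ac; case: ifP => // _.
have d0 : 0 < v1 - v2 by rewrite subr_gt0.
have ha : 0 < 1 + a * s by rewrite ltr_wpDr // mulr_ge0 // ltW.
have b0 : 0 <= b := le_trans a0 ab.
have hb : 0 < 1 + b * s by rewrite ltr_wpDr // mulr_ge0 // ltW.
rewrite ler_pdivrMr ?mulr_gt0 // mulrAC ler_pdivlMr ?mulr_gt0 //.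
rewrite -subr_ge0.
have -> : b * ((v1 - v2) * (1 + a * s)) - a * ((v1 - v2) * (1 + b * s)) = (b - a) * (v1 - v2) by ring.
by rewrite mulr_ge0 // ?subr_ge0 // ltW.
Qed.
Lemma mfac (R : realType) (lam xi v1 v2 x t : R) : 0 <= lam -> v2 < v1 ->
  measurable_fun `]0, t[ (fun s => expR (- (xi * s)) * p_ac lam v1 v2 x s).
Proof.
move=> lam0 v21.
apply: measurable_realfun.measurable_funM.
  by apply: measurable_funTS; apply: measurableT_comp => //; apply: measurableT_comp => //; apply: measurable_realfun.measurable_funM.
rewrite /p_ac; apply: measurable_fun_if => //.
- apply: measurable_and; apply: measurable_realfun.measurable_fun_ltr => //; apply: measurable_realfun.measurable_funM => //.
- apply: (measurable_funS (E := `]0, t[)) => //.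
  apply: measurable_realfun.subspace_continuous_measurable_fun => //.
  apply: continuous_in_subspaceT => s; rewrite inE /= in_itv /= => /andP[s0 _].
  apply: (@continuousM R R (cst lam) (fun u => ((v1 - v2) * (1 + lam * u))^-1)); first exact: cst_continuous.
  apply: continuousV.
    by rewrite mulf_neq0 // ?subr_eq0 ?gt_eqF // ltr_wpDr // mulr_ge0 // ltW.
  apply: (@continuousM R R (cst (v1 - v2)) (fun u => 1 + lam * u)); first exact: cst_continuous.
  apply: (@continuousD R R R (cst 1) (fun u => lam * u)); first exact: cst_continuous.
  apply: (@continuousM R R (cst lam) id); first exact: cst_continuous.
  by move=> ? ; apply: cvg_id.
Qed.
Lemma lim_frac (R : realType) (c s : R) : c != 0 -> 0 < s ->
  (fun lam : R => lam / (c * (1 + lam * s))) @ +oo --> (c * s)^-1.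
Proof.
move=> c0 s0.
have H : (fun lam : R => (c * (lam^-1 + s))^-1) @ +oo --> (c * s)^-1.
  apply: cvgV; first by rewrite mulf_neq0 // gt_eqF.
  rewrite -[in X in _ --> X](add0r s).
  apply: cvgMr; apply: cvgD; last exact: cvg_cst.
  apply/gtr0_cvgV0; last exact: cvg_id.
  by near=> lam.
apply: cvg_trans H; apply: near_eq_cvg; near=> lam.
have lam0 : 0 < lam by near: lam; exists 0; split => // ? /=.
have h1 : 1 + lam * s != 0 by rewrite gt_eqF // ltr_wpDr // ltW // mulr_gt0.
rewrite (_ : lam^-1 + s = (1 + lam * s) / lam); last by field; rewrite gt_eqF.
by field; rewrite h1 c0 gt_eqF.
Unshelve. all: end_near. Qed.


Lemma inv_cvg0 (R : realType) : (fun lam : R => lam^-1) @ +oo --> (0 : R).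
Proof.
apply/gtr0_cvgV0; last exact: cvg_id.
by near=> lam.
Unshelve. all: end_near. Qed.

Lemma pac_lim (R : realType) (v1 v2 x s : R) : v2 < v1 -> 0 < s ->
  (fun lam => p_ac lam v1 v2 x s) @ +oo -->
  (if (v2 * s < x) && (x < v1 * s) then ((v1 - v2) * s)^-1 else 0).
Proof.
move=> v21 s0; rewrite /p_ac; case: ifP => _; last exact: cvg_cst.
by apply: lim_frac => //; rewrite subr_eq0 gt_eqF.
Qed.

Lemma int_cvg (R : realType) (xi v1 v2 x t : R) : v2 < v1 ->
  (fun lam => (\int[lebesgue_measure]_(s in `]0%R, t[)
                 (expR (- (xi * s)) * p_ac lam v1 v2 x s)%:E)%E) @ +oo -->
  (\int[lebesgue_measure]_(s in `]0%R, t[) (flim xi v1 v2 x s)%:E)%E.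
Proof.
move=> v21.
set f := fun (lam s : R) => (expR (- (xi * s)) * p_ac lam v1 v2 x s)%:E.
set G := fun lam : R => (\int[lebesgue_measure]_(s in `]0%R, t[) f (Num.max lam 0%R) s)%E.
have mf lam : 0 <= lam -> measurable_fun `]0%R, t[ (fun s => f lam s).
  by move=> l0; apply/measurable_EFinP; exact: mfac.
have f0 lam s : 0 <= lam -> `]0%R, t[%classic s -> (0 <= f lam s)%E.
  move=> l0; rewrite /= in_itv /= => /andP[s0 _].
  by rewrite lee_fin mulr_ge0 ?expR_ge0 // pac_ge0.
have ndG : {homo G : a b / a <= b >-> (a <= b)%E}.
  move=> a b ab; apply: ge0_le_integral => //.
  - by move=> s; apply: f0; rewrite le_max lexx orbT.
  - by apply: mf; rewrite le_max lexx orbT.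
  - by apply: mf; rewrite le_max lexx orbT.
  - move=> s; rewrite /= in_itv /= => /andP[s0 _].
    rewrite lee_fin ler_wpM2l ?expR_ge0 // pac_nd // ?le_max ?lexx ?orbT //.
    apply/orP; have [b0|b0] := leP 0 b; [left; by rewrite ge_max ab b0 | right; rewrite ge_max lexx andbT; exact: le_trans ab (ltW b0)].
have cG := nondecreasing_cvge ndG.
have cGn : (G \o (fun n : nat => n%:R)) @ \oo --> ereal_sup (range G).
  exact: cvg_comp cvgr_idn cG.
have mct := @cvg_monotone_convergence _ _ _ lebesgue_measure `]0%R, t[ 
   (measurable_itv _) (fun n => f n%:R) (fun n => mf _ (ler0n _ _))
   (fun n s => f0 _ _ (ler0n _ _)).
have /(_ _)/wrap[|] := mct.
  move=> s; rewrite /= in_itv /= => /andP[s0 _] m n mn.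
  rewrite lee_fin ler_wpM2l ?expR_ge0 // pac_nd // ler_nat //.
clear mct => mct.
have E1 : (\int[lebesgue_measure]_(s in `]0%R, t[) limn (fun n => f n%:R s))%E =
          (\int[lebesgue_measure]_(s in `]0%R, t[) (flim xi v1 v2 x s)%:E)%E.
  apply: eq_integral => s; rewrite inE /= in_itv /= => /andP[s0 _].
  apply: cvg_lim => //.
  have h := cvg_comp _ _ cvgr_idn (@pac_lim _ v1 v2 x s v21 s0).
  have h3 := cvgMl_tmp (a := expR (- (xi * s))) h.
  apply/fine_cvgP; split; first exact: nearW.
  rewrite /flim; move: h3; case: ifP => _ h3; last rewrite mulr0 in h3; exact: h3.
rewrite E1 in mct.
have E2 : ereal_sup (range G) = (\int[lebesgue_measure]_(s in `]0%R, t[) (flim xi v1 v2 x s)%:E)%E.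
  rewrite -(cvg_lim _ cGn) // -(cvg_lim _ mct) //.
  have -> : G \o (fun n : nat => n%:R) = (fun n : nat => (\int[lebesgue_measure]_(x0 in `]0%R, t[) f n%:R x0)%E) by apply: funext => n; rewrite /= /G max_l.
  by [].
rewrite -E2; apply: cvg_trans cG; apply: near_eq_cvg; near=> lam.
rewrite /G max_l //.
Unshelve. all: end_near. Qed.
Local Open Scope ereal_scope.
Lemma mscl (R : realType) (c : R) : measurable_fun setT ((fun u : R => c * u)%R : measurableTypeR R -> measurableTypeR R).
Proof. by apply: measurable_realfun.measurable_funM. Qed.

Lemma leb_scale (R : realType) (c : R) (c0 : (0 < c)%R) (A : set R) : measurable A ->
  lebesgue_measure A =
  c%:E * lebesgue_measure ((fun u : R => c * u)%R @^-1` A).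
Proof.
move=> mA.
pose nu := measure_function_pushforward__canonical__measure_function_Measure lebesgue_measure (@mscl R c).
pose mu2 : {measure set (measurableTypeR R) -> \bar R} := mscale (NngNum (ltW c0)) nu.
rewrite (@lebesgue_measure_unique R mu2) //.
move=> _ [[a b]] _ <-.
rewrite /= /mscale /pushforward /=.
rewrite [X in _ * X](_ : _ = lebesgue_measure `](a / c)%R, (b / c)%R]%classic); last first.
  rewrite /pushforward; congr (lebesgue_measure _).
  apply/seteqP; split => u /=; rewrite !in_itv /= ler_pdivlMr // ltr_pdivrMr // ?[(u * c)%R]mulrC //.
rewrite !lebesgue_measure_itv /= !lte_fin ltr_pM2r ?invr_gt0 //.
case: ifP => _; last by rewrite mule0.
rewrite -!EFinD -EFinM; congr EFin; field; by rewrite gt_eqF.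

Qed.

Lemma int_scale (R : realType) (c a b : R) (c0 : (0 < c)%R) (g : R -> \bar R) :
  measurable_fun setT g -> (forall s, 0 <= g s) ->
  \int[lebesgue_measure]_(s in `](a * c)%R, (b * c)%R[) g s =
  c%:E * \int[lebesgue_measure]_(u in `]a, b[) g (c * u)%R.
Proof.
move=> mg g0.
pose nu := measure_function_pushforward__canonical__measure_function_Measure lebesgue_measure (@mscl R c).
pose mu2 : {measure set (measurableTypeR R) -> \bar R} := mscale (NngNum (ltW c0)) nu.
rewrite (eq_measure_integral mu2); last first.
  move=> A mA _; rewrite /mu2 /= /mscale /=.
  exact: leb_scale.
rewrite ge0_integral_mscale //=; last exact: measurable_funTS.
congr (_ * _).
rewrite ge0_integral_pushforward //; last exact: measurable_funTS.
  congr (integral _ _ _).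
  apply/seteqP; split => u /=; rewrite !in_itv /= (mulrC c u) !ltr_pM2r //.
exact: mscl.
Qed.

Lemma gamma_eq (R : realType) (c a b : R) : (0 < c)%R -> (0 <= a)%R ->
  Gamma_inc 0 (a * c) (b * c) =
  \int[lebesgue_measure]_(u in `]a, b[) (expR (- (c * u)) / u)%:E.
Proof.
move=> c0 a0; rewrite /Gamma_inc int_scale //; last first.
- by move=> s; rewrite lee_fin mulr_ge0 ?powR_ge0 ?expR_ge0.
- apply/measurable_EFinP; apply: measurable_realfun.measurable_funM.
    exact: measurable_powR.
  by apply: measurableT_comp => //; apply: measurableT_comp.
rewrite -ge0_integralZl_EFin //; last 3 first.
- by move=> s _; rewrite lee_fin mulr_ge0 ?powR_ge0 ?expR_ge0.
- apply/measurable_funTS/measurable_EFinP; apply: measurable_realfun.measurable_funM.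
    apply: (measurableT_comp (measurable_powR _)) => //.
  apply: measurableT_comp => //; apply: measurableT_comp => //.
- exact: ltW.
apply: eq_integral => u; rewrite inE /= in_itv /= => /andP[au _].
have u0 : (0 < u)%R := le_lt_trans a0 au.
rewrite sub0r powR_inv1 ?mulr_ge0 ?ltW // -EFinM; congr EFin.
by field; rewrite !gt_eqF.
Qed.
Local Close Scope ereal_scope.
Definition aa {R : realType} (v1 v2 x : R) : R :=
  if v2 < 0 then M_x v1 v2 x else x / v1.

Lemma aa_ge0 (R : realType) (v1 v2 x t : R) :
  ((v2 < 0 < v1) \/ (0 < v2 < v1)) -> 0 < t -> v2 * t < x < v1 * t -> 0 <= aa v1 v2 x.
Proof.
move=> hv t0 /andP[h1 h2]; rewrite /aa /M_x.
case: hv => /andP[a1 a2].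
  rewrite a1 le_max; have [x0|x0] := leP 0 x.
    by rewrite divr_ge0 // ltW.
  by rewrite orbC ler_ndivlMr // mul0r ltW.
rewrite ltNge (ltW a1) /=; apply: divr_ge0; last by apply: ltW; apply: lt_trans a2.
by apply: ltW; apply: lt_trans h1; rewrite mulr_gt0.
Qed.

Lemma cond_iff (R : realType) (v1 v2 x t s : R) :
  ((v2 < 0 < v1) \/ (0 < v2 < v1)) -> 0 < t -> v2 * t < x < v1 * t ->
  0 < s -> s < t ->
  ((v2 * s < x) && (x < v1 * s)) = (aa v1 v2 x < s).
Proof.
move=> hv t0 /andP[h1 h2] s0 st; rewrite /aa /M_x.
case: hv => /andP[a1 a2].
  rewrite a1 gt_max ltr_pdivrMr // ltr_ndivrMr // [s * v1]mulrC [s * v2]mulrC.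
  by rewrite andbC.
have v10 : 0 < v1 by apply: lt_trans a2.
rewrite (_ : (v2 < 0) = false); last by rewrite ltNge (ltW a1).
rewrite /= ltr_pdivrMr // [s * v1]mulrC.
have -> : v2 * s < x by apply: le_lt_trans h1; rewrite ler_pM2l // ltW.
by [].
Qed.

Lemma mfinv (R : realType) (xi a t : R) : 0 <= a ->
  measurable_fun `]a, t[ (fun u : R => (expR (- (xi * u)) / u)%:E).
Proof.
move=> a0; apply/measurable_EFinP.
apply: measurable_realfun.subspace_continuous_measurable_fun => //.
apply: continuous_in_subspaceT => u; rewrite inE /= in_itv /= => /andP[au _].
have u0 : 0 < u := le_lt_trans a0 au.
apply: (@continuousM R R (fun u => expR (- (xi * u))) (fun u => u^-1)).
  apply: continuous_comp; last exact: continuous_expR.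
  apply: continuousN; apply: (@continuousM R R (cst xi) id); first exact: cst_continuous.
  by move=> ? ; apply: cvg_id.
by apply: continuousV; [rewrite gt_eqF | move=> ?; apply: cvg_id].
Qed.

Lemma int_flim (R : realType) (xi v1 v2 x t : R) :
  v2 < v1 -> ((v2 < 0 < v1) \/ (0 < v2 < v1)) -> 0 < t -> v2 * t < x < v1 * t ->
  (\int[lebesgue_measure]_(s in `]0%R, t[) (flim xi v1 v2 x s)%:E)%E =
  ((v1 - v2)^-1%:E * \int[lebesgue_measure]_(u in `]aa v1 v2 x, t[) (expR (- (xi * u)) / u)%:E)%E.
Proof.
move=> v21 hv t0 hx.
have a0 := aa_ge0 hv t0 hx.
rewrite -ge0_integralZl_EFin //; last 3 first.
- move=> u; rewrite /= in_itv /= => /andP[au _].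
  by rewrite lee_fin divr_ge0 ?expR_ge0 // ltW // (le_lt_trans a0 au).
- exact: mfinv.
- by rewrite invr_ge0 subr_ge0 ltW.
rewrite [LHS]integral_mkcond [RHS]integral_mkcond; apply: eq_integral => s _.
rewrite /patch /=. rewrite !mem_setE !in_itv /=.
have [s0|s0] := ltP 0 s; last first.
  by rewrite /= ifF //; apply/negbTE; rewrite negb_and -leNgt (le_trans s0 a0).
have [st|st] := ltP s t; last by rewrite !andbF.
rewrite andbT /= /flim (cond_iff hv t0 hx s0 st).
case: ifP => // _; rewrite -EFinM; congr EFin.
by field; rewrite !gt_eqF // subr_gt0.
Qed.

Unset Implicit Arguments. Set Strict Implicit.

Theorem corollary2 (R : realType) (xi v1 v2 vj x t : R) :
  0 < xi -> v2 < v1 -> ((v2 < 0 < v1) \/ (0 < v2 < v1)) ->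
  (vj = v1 \/ vj = v2) ->
  0 < t -> v2 * t < x < v1 * t ->
  (fun lam : R => ptilde lam xi v1 v2 vj x t) @ +oo --> pi_lim xi v1 v2 x t.
Proof.
move=> xi0 v21 hv hvj t0 hx.
have /andP[hx1 hx2] := hx.
have a0 := aa_ge0 hv t0 hx.
have Ival : I_ind v1 v2 x t = 1.
  by rewrite /I_ind ifT //; rewrite hx2 andbT; apply: le_lt_trans hx1; rewrite ge_min lexx.
have Gval : Gamma_xi xi v1 v2 x t = Gamma_inc 0 (aa v1 v2 x * xi) (t * xi).
  rewrite /Gamma_xi /aa; case: ifP => // v2n.
  rewrite /m_xt min_r //.
  have v20 : 0 < v2 by case: hv => /andP[] //; rewrite v2n.
  by rewrite ler_pdivlMr // mulrC ltW.
rewrite gamma_eq // in Gval.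
have E := int_flim xi v21 hv t0 hx.
have vj0 : vj != 0.
  case: hvj => ->; case: hv => /andP[a1 a2].
  - by rewrite gt_eqF.
  - by rewrite gt_eqF // (lt_trans a1).
  - by rewrite lt_eqF.
  - by rewrite gt_eqF.
have Hd : dirac_pt (x - vj * t) = 0%E.
  rewrite /dirac_pt ifF // subr_eq0.
  by case: hvj => ->; [rewrite lt_eqF | rewrite gt_eqF].
have L1 : (fun lam => ((expR (- (xi * t)))%:E * p_gen lam v1 v2 vj x t)%E) @ +oo -->
          (expR (- (xi * t)) * ((v1 - v2) * t)^-1)%:E.
  have -> : (fun lam => ((expR (- (xi * t)))%:E * p_gen lam v1 v2 vj x t)%E) =
            (fun lam => (expR (- (xi * t)) * p_ac lam v1 v2 x t)%:E).
    by apply: funext => lam; rewrite /p_gen Hd mul0e add0e -EFinM.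
  apply/fine_cvgP; split; first exact: nearW.
  have h := @pac_lim _ v1 v2 x t v21 t0; rewrite hx in h.
  exact: (cvgMl_tmp (a := expR (- (xi * t))) h).
have L2 : (fun lam => dirac_time_integral lam xi vj x t) @ +oo --> 0%E.
  have [hb|c] := boolP ((0 < x / vj) && (x / vj < t)); last first.
    have -> : (fun lam => dirac_time_integral lam xi vj x t) = (fun=> 0%E).
      by apply: funext => lam; rewrite /dirac_time_integral /= (negbTE c).
    exact: cvg_cst.
  have -> : (fun lam => dirac_time_integral lam xi vj x t) =
     (fun lam => (expR (- (xi * (x / vj))) / (`|vj| * (1 + lam * (x / vj))))%:E).
    by apply: funext => lam; rewrite /dirac_time_integral /= hb.
  have /andP[s00 _] := hb.
  apply/fine_cvgP; split; first exact: nearW.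
  have c0 : `|vj| != 0 by rewrite normr_eq0.
  have h1 := lim_frac c0 s00.
  have h2 : (fun lam : R => lam^-1) @ +oo --> 0.
    apply/gtr0_cvgV0; last exact: cvg_id.
    by near=> lam.
  have h4 := cvgMl_tmp (a := expR (- (xi * (x / vj)))) (cvgM h1 h2).
  rewrite !mulr0 in h4.
  apply: (cvg_trans _ (h4 _ _)); apply: near_eq_cvg; near=> lam.
  have lam0 : 0 < lam by near: lam; exists 0; split => // ? /=.
  have h5 : 1 + lam * (x / vj) != 0 by rewrite gt_eqF // ltr_wpDr // ltW // mulr_gt0.
  have e : 1 + lam * (x / vj) = (vj + lam * x) / vj by field.
  rewrite e mulf_eq0 negb_or in h5; case/andP: h5 => h6 _.
  rewrite /=; field.
  by rewrite h6 c0 vj0 gt_eqF.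
have L3 := @int_cvg R xi v1 v2 x t v21.
have -> : pi_lim xi v1 v2 x t = ((expR (- (xi * t)) * ((v1 - v2) * t)^-1)%:E +
    xi%:E * ((\int[lebesgue_measure]_(s in `]0%R, t[) (flim xi v1 v2 x s)%:E) + 0))%E.
  by rewrite /pi_lim hx Ival Gval E adde0 muleA -EFinM mul1r.
rewrite /ptilde; apply: cvgeD.
- exact: fin_num_adde_defr.
- exact: L1.
apply: cvgeZl => //; apply: cvgeD.
- exact: fin_num_adde_defl.
- exact: L3.
- exact: L2.
Unshelve. all: end_near.
Qed.
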